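(* Let $C\subseteq 2^X$ be a maximum class of VC-dimension $d$ and $D\subseteq C$ a maximum class of VC-dimension $d-1$. Let $Q$ be an incomplete cube for $(C,D)$ with source $s$ and support $\sigma$, and let $x,y\in X$ with $x\notin\sigma$ and $y\in\sigma$. Then: (i) $Q_x$ is an incomplete cube for $(C_x,D_x)$ whose source is $s_x$; (ii) $Q^y$ is an incomplete cube for $(C^y,D^y)$ whose source is $s^y$.
   Context: $X$ is a finite set, $n=|X|$; concepts are identified with characteristic functions, $c|Y$ is restriction and $C|Y=\{c|Y:c\in C\}$. $Y$ is shattered by $C$ if $C|Y=2^Y$; $X(C)$ is the family of shattered sets; VC-dimension is the maximum size of a shattered set; $C$ is maximum if $|C|=\sum_{i=0}^d\binom{n}{i}$, $d$ its VC-dimension. A cube of $2^X$ is $\{T\cup Z:Z\subseteq Y\}$ with $Y\subseteq X$, $T\subseteq X\setminus Y$; $Y=\mathrm{supp}$ is its support and $T$ its tag; a cube of $C$ is a cube contained in $C$. For $x\in X$: $c_x=c|(X\setminus\{x\})$ and $C_x=\{c_x:c\in C\}$ (restriction, a class on $X\setminus\{x\}$); the reduction $C^x$ is the class on $X\setminus\{x\}$ consisting of the tags of all cubes of $C$ with support $\{x\}$ (i.e. of $c\setminus\{x\}$ for all $c$ with $c,c\Delta\{x\}\in C$), and for such $c$, $c^x=c\setminus\{x\}$; the same notation applies to $D$ and to a cube $Q$ (so $Q_x$, $Q^y$, $s_x$, $s^y$). A missed simplex for $(C,D)$ is $\sigma\in X(C)\setminus X(D)$; an incomplete cube for $(C,D)$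 is a cube $Q$ of $C$ whose support is a missed simplex; its source is the unique $c\in Q$ with $c|\mathrm{supp}(Q)\notin D|\mathrm{supp}(Q)$. (Incomplete cubes and sources for $(C_x,D_x)$ and $(C^y,D^y)$ are defined in the same way.) *)

(* Defs.v *)
(* Concepts over a finite domain X are sets {set T}; a class
   on a ground set G : {set T} is a family C : {set {set T}} of subsets of G. *)
From mathcomp Require Import all_boot all_order all_algebra.
Set Implicit Arguments. Unset Strict Implicit. Unset Printing Implicit Defensive.
Import GRing.Theory Num.Theory.

Section VC.
Variable T : finType.

Definition restrC (C : {set {set T}}) (Y : {set T}) : {set {set T}} :=
  [set c :&: Y | c in C].

Definition shattered (C : {set {set T}}) (Y : {set T}) : bool :=
  restrC C Y == powerset Y.

Definition class_on (G : {set T}) (C : {set {set T}}) : Prop :=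
  forall c, c \in C -> c \subset G.

(* VC-dimension of C is d (d = -1 exactly when no set is shattered, i.e. C empty) *)
Definition vcdim_is (C : {set {set T}}) (d : int) : Prop :=
  (forall Y, shattered C Y -> (Posz #|Y| <= d)%R) /\
  (d = (-1)%R \/ exists Y, shattered C Y /\ Posz #|Y| = d).

Definition maximum (G : {set T}) (C : {set {set T}}) (d : int) : Prop :=
  [/\ class_on G C, vcdim_is C d &
      #|C| = \sum_(i < `|(d + 1)%R|%N) 'C(#|G|, i)].

Definition cube (Y Tg : {set T}) : {set {set T}} :=
  [set Tg :|: Z | Z in powerset Y].

(* Q is an incomplete cube for (C,D) (classes on ground set G) with support sigma:
   a cube of 2^G contained in C whose support is a missed simplex of (C,D). *)
Definition incomplete_cube (G : {set T}) (C D Q : {set {set T}}) (sigma : {set T})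
  : Prop :=
  exists Tg : {set T},
    [/\ sigma \subset G, Tg \subset G :\: sigma, Q = cube sigma Tg,
        Q \subset C & shattered C sigma && ~~ shattered D sigma].

Definition is_source (D Q : {set {set T}}) (sigma s : {set T}) : Prop :=
  [/\ s \in Q, s :&: sigma \notin restrC D sigma &
      forall c, c \in Q -> c :&: sigma \notin restrC D sigma -> c = s].

Definition toggle (c : {set T}) (y : T) : {set T} :=
  if y \in c then c :\ y else y |: c.

(* the reduction C^y : tags of cubes of C with support {y} *)
Definition reduction (C : {set {set T}}) (y : T) : {set {set T}} :=
  [set c :\ y | c in [set c in C | toggle c y \in C]].

End VC.

(* Main.v *)
Require Import Defs.
From mathcomp Require Import all_boot all_order all_algebra zify.
Import GRing.Theory Num.Theory.
Set Implicit Arguments. Unset Strict Implicit. Unset Printing Implicit Defensive.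

Definition Phi (j m : nat) := \sum_(i < j) 'C(m, i).

Lemma PhiS j m : Phi j m.+1 = Phi j m + Phi j.-1 m.
Proof.
rewrite /Phi; case: j => [|j] /=; first by rewrite !big_ord0.
rewrite big_ord_recl bin0 /=.
under eq_bigr => i _ do rewrite /bump /= add1n binS.
rewrite big_split /= [in RHS]big_ord_recl bin0 addnA.
by [].
Qed.

Lemma PhiSj j m : Phi j.+1 m = Phi j m + 'C(m, j).
Proof. by rewrite /Phi big_ord_recr. Qed.

Lemma Phi_full m : Phi m.+1 m = 2 ^ m.
Proof.
elim: m => [|m IH]; first by rewrite /Phi big_ord_recl big_ord0.
rewrite PhiS /= IH PhiSj bin_small // addn0 expnS; lia.
Qed.

Lemma Phi_mono j k m : j <= k -> Phi j m <= Phi k m.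
Proof.
move=> /subnK <-; elim: (k - j) => [|n IH] //=.
by rewrite addSn PhiSj (leq_trans IH) // leq_addr.
Qed.

Lemma Phi_ge m j : m <= j -> (2 ^ m).-1 <= Phi j m.
Proof.
move=> mj; have := Phi_full m; rewrite PhiSj binn addn1 => <- /=.
exact: Phi_mono.
Qed.

Section S.
Variable T : finType.
Implicit Types (E : {set {set T}}) (G A B Y : {set T}).

Lemma setIIsub (c A B : {set T}) : A \subset B -> c :&: B :&: A = c :&: A.
Proof. by move=> AB; rewrite -setIA (setIidPr AB). Qed.

Lemma restrC_restrC E A B : A \subset B -> restrC (restrC E B) A = restrC E A.
Proof.
move=> AB; rewrite /restrC -imset_comp; apply: eq_imset => c /=.
exact: setIIsub.
Qed.

Lemma shatteredP E Y :
  reflect (forall Z : {set T}, Z \subset Y -> exists2 c, c \in E & c :&: Y = Z) (shattered E Y).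
Proof.
apply: (iffP eqP) => [H Z ZY|H].
  have : Z \in restrC E Y by rewrite H powersetE.
  by case/imsetP => c cE ->; exists c.
apply/eqP; rewrite eqEsubset; apply/andP; split.
  by apply/subsetP => Z /imsetP [c _ ->]; rewrite powersetE subsetIr.
apply/subsetP => Z; rewrite powersetE => /H [c cE <-]; exact: imset_f.
Qed.

Lemma shattered_restr E B Y : shattered (restrC E B) Y -> Y \subset B /\ shattered E Y.
Proof.
move=> /shatteredP H.
have [c /imsetP [c' _ ->] eY] := H Y (subxx Y).
have YB : Y \subset B by rewrite -eY -setIA subIset // subsetIl orbT.
split=> //; apply/shatteredP => Z ZY; have [c2 /imsetP [c3 c3E ->] e2] := H Z ZY.
by exists c3 => //; rewrite -e2 setIIsub.
Qed.

Lemma toggle_both E c x : c \in E -> toggle c x \in E -> c :\ x \in E /\ x |: c \in E.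
Proof.
rewrite /toggle; case: ifP => xc cE tE.
  by split=> //; rewrite (setUidPr _) // sub1set.
by split=> //; rewrite (setDidPl _) // disjoint_sym disjoints1 xc.
Qed.

Lemma shattered_red E x Y : shattered (reduction E x) Y -> x \notin Y /\ shattered E (x |: Y).
Proof.
move=> /shatteredP H.
have [c0 /imsetP [c' _ ->] eY] := H Y (subxx Y).
have xY : x \notin Y by rewrite -eY !inE eqxx.
split=> //; apply/shatteredP => Z ZY.
have ZxY : Z :\ x \subset Y by rewrite subDset.
have [e /imsetP [c /[!inE] /andP [cE tE] ->] eZ] := H (Z :\ x) ZxY.
have [c0E c1E] := toggle_both cE tE.
case xZ : (x \in Z).
  exists (x |: c) => //; apply/setP => t; move/setP/(_ t): eZ; rewrite !inE.
  by case: (t =P x) => [->|_] //=; rewrite xZ.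
exists (c :\ x) => //; apply/setP => t; move/setP/(_ t): eZ; rewrite !inE.
by case: (t =P x) => [->|_] //=; rewrite xZ.
Qed.

Lemma card_split E G x : class_on G E -> x \in G ->
  #|E| = #|restrC E (G :\ x)| + #|reduction E x|.
Proof.
move=> HE xG.
set E1 := [set c in E | x \in c]; set E0 := [set c in E | x \notin c].
have -> : restrC E (G :\ x) = [set c :\ x | c in E].
  apply: eq_in_imset => c cE; apply/setP => t; rewrite !inE.
  by case: (t =P x) => //= _; case tc: (t \in c); rewrite ?andbT ?andbF // (subsetP (HE c cE)).
have EU : E = E1 :|: E0.
  by apply/setP => c; rewrite !inE; case: (c \in E); case: (x \in c).
have card1 : #|[set c :\ x | c in E1]| = #|E1|.
  apply: card_in_imset => c1 c2; rewrite !inE => /andP [_ h1] /andP [_ h2] e.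
  by rewrite -(setD1K h1) -(setD1K h2) e.
have card0 : #|[set c :\ x | c in E0]| = #|E0|.
  apply: card_in_imset => c1 c2; rewrite !inE => /andP [_ h1] /andP [_ h2].
  by rewrite !(setDidPl _) // disjoint_sym disjoints1.
have -> : reduction E x = [set c :\ x | c in E1] :&: [set c :\ x | c in E0].
  apply/setP => e; rewrite inE; apply/imsetP/andP.
    case=> c; rewrite inE => /andP [cE tE] ->; have [c0E c1E] := toggle_both cE tE.
    split; apply/imsetP.
      exists (x |: c); first by rewrite !inE c1E eqxx.
      by apply/setP => t; rewrite !inE; case: (t =P x).
    exists (c :\ x); first by rewrite !inE c0E eqxx.
    by apply/setP => t; rewrite !inE; case: (t =P x).
  case=> /imsetP [c1 /[!inE] /andP [c1E xc1] ->] /imsetP [c0 /[!inE] /andP [c0E xc0] ee].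
  exists c1 => //; rewrite inE c1E /toggle xc1 ee (setDidPl _) //.
  by rewrite disjoint_sym disjoints1.
rewrite EU imsetU cardsUI card1 card0 -cardsUI.
suff -> : E1 :&: E0 = set0 by rewrite cards0 addn0.
by apply/setP => c; rewrite !inE; case: (x \in c); rewrite ?andbF.
Qed.

Definition vcb E j := forall Y, shattered E Y -> #|Y| < j.

Lemma class_restr E G x : class_on G E -> class_on (G :\ x) (restrC E (G :\ x)).
Proof. by move=> HE c /imsetP [c' _ ->]; rewrite subsetIr. Qed.

Lemma class_red E G x : class_on G E -> class_on (G :\ x) (reduction E x).
Proof.
move=> HE c /imsetP [c' /[!inE] /andP [cE _] ->].
by apply/subsetP => t; rewrite !inE => /andP [-> /(subsetP (HE _ cE)) ->].
Qed.

Lemma vcb_restr E G j : vcb E j -> vcb (restrC E G) j.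
Proof. by move=> H Y /shattered_restr [_ /H]. Qed.

Lemma vcb_red E x j : vcb E j -> vcb (reduction E x) j.-1.
Proof.
move=> H Y /shattered_red [xY /H]; rewrite cardsU1 xY add1n.
by case: (j) H.
Qed.

Lemma sauer m : forall G E j, #|G| = m -> class_on G E -> vcb E j -> #|E| <= Phi j m.
Proof.
elim: m => [|m IH] G E j cG HE HV.
  have G0 : G = set0 by apply/eqP; rewrite -cards_eq0 cG.
  case: (set_0Vmem E) => [->|[c cE]]; first by rewrite cards0.
  have : shattered E set0.
    apply/shatteredP => Z; rewrite subset0 => /eqP ->; exists c => //; exact: setI0.
  move=> /HV; rewrite cards0; case: j HV => // j _ _.
  rewrite /Phi big_ord_recl bin0 (leq_trans _ (leq_addr _ _)) //.
  have -> : E = [set set0].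
    apply/eqP; rewrite eqEsubset; apply/andP; split; apply/subsetP => e; rewrite ?inE.
      by move=> eE; have := HE e eE; rewrite G0 subset0.
    by move/eqP => ->; have := HE c cE; rewrite G0 subset0 => /eqP <-.
  by rewrite cards1.
have [x xG] : exists x, x \in G.
  by apply/set0Pn; rewrite -card_gt0 cG.
have cG' : #|G :\ x| = m by move: cG; rewrite (cardsD1 x) xG add1n => -[].
rewrite (card_split HE xG) PhiS leq_add //.
  apply: (IH _ _ _ cG'); [exact: class_restr | exact: vcb_restr].
apply: (IH _ _ _ cG'); [exact: class_red | exact: vcb_red].
Qed.

Lemma extremal E G j x : class_on G E -> vcb E j -> #|E| = Phi j #|G| -> x \in G ->
  #|restrC E (G :\ x)| = Phi j #|G :\ x| /\ #|reduction E x| = Phi j.-1 #|G :\ x|.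
Proof.
move=> HE HV cE xG.
have cG : #|G| = #|G :\ x|.+1 by rewrite (cardsD1 x G) xG.
have h1 := sauer (erefl _) (class_restr (x:=x) HE) (vcb_restr (G:=G :\ x) HV).
have h2 := sauer (erefl _) (class_red (x:=x) HE) (vcb_red (x:=x) HV).
move: cE; rewrite (card_split HE xG) cG PhiS; lia.
Qed.

Lemma restr_extremal k : forall G E A j, #|G :\: A| = k -> A \subset G -> class_on G E ->
  vcb E j -> #|E| = Phi j #|G| -> #|restrC E A| = Phi j #|A|.
Proof.
elim: k => [|k IH] G E A j cGA AG HE HV cE.
  have -> : A = G.
    apply/eqP; rewrite eqEsubset AG /=; apply/subsetP => t tG.
    apply: contraT => tA; have : t \in G :\: A by rewrite inE tA.
    move=> tGA; have : 0 < #|G :\: A| by apply/card_gt0P; exists t.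
    by rewrite cGA.
  rewrite -cE; congr #|_|; rewrite /restrC (@eq_in_imset _ _ _ id) ?imset_id //.
  by move=> c cE'; apply/setIidPl; exact: HE.
have [x xGA] : exists x, x \in G :\: A by apply/set0Pn; rewrite -card_gt0 cGA.
move: (xGA); rewrite inE => /andP [xA xG].
have [e1 _] := extremal HE HV cE xG.
rewrite -(restrC_restrC E (_ : A \subset G :\ x)); last first.
  by apply/subsetP => t tA; rewrite !inE (subsetP AG) // andbT; apply: contraNneq xA => <-.
have AGx : A \subset G :\ x.
  by apply/subsetP => t tA; rewrite !inE (subsetP AG) // andbT; apply: contraNneq xA => <-.
have cGA' : #|(G :\ x) :\: A| = k.
  move: cGA; rewrite (cardsD1 x) xGA add1n => -[<-]; congr #|_|.
  by rewrite !setDDl setUC.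
exact: (IH _ _ _ _ cGA' AGx (class_restr HE) (vcb_restr HV) e1).
Qed.
End S.


Lemma cubeE (T : finType) (S Tg c : {set T}) : (forall t, t \in Tg -> t \notin S) ->
  (c \in cube S Tg) = (c :\: S == Tg).
Proof.
move=> HT; apply/imsetP/eqP.
  move=> [Z]; rewrite powersetE => ZS ->; apply/setP => t; rewrite !inE.
  have h1 := introT implyP (HT t); have h2 := introT implyP (subsetP ZS t).
  by move: h1 h2; case: (t \in S); case: (t \in Tg); case: (t \in Z).
move=> <-; exists (c :&: S); first by rewrite powersetE subsetIr.
by rewrite setUC setID.
Qed.

Lemma int_lt (a d : nat) : (Posz a <= Posz d - 1)%R -> a < d.
Proof. lia. Qed.
Lemma int_le (a d : nat) : (Posz a <= Posz d)%R -> a <= d.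
Proof. lia. Qed.

Unset Implicit Arguments.
Set Strict Implicit.
Theorem lemma5p4 (T : finType) (C D : {set {set T}}) (d : nat)
  (Q : {set {set T}}) (sigma s : {set T}) (x y : T) :
  maximum [set: T] C (Posz d) ->
  maximum [set: T] D (Posz d - 1)%R ->
  D \subset C ->
  incomplete_cube [set: T] C D Q sigma ->
  is_source D Q sigma s ->
  x \notin sigma -> y \in sigma ->
  (exists sigma' : {set T},
     incomplete_cube ([set: T] :\ x)
       (restrC C ([set: T] :\ x)) (restrC D ([set: T] :\ x))
       (restrC Q ([set: T] :\ x)) sigma' /\
     is_source (restrC D ([set: T] :\ x)) (restrC Q ([set: T] :\ x))
       sigma' (s :&: ([set: T] :\ x))) /\
  (exists sigma' : {set T},
     incomplete_cube ([set: T] :\ y)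
       (reduction C y) (reduction D y) (reduction Q y) sigma' /\
     is_source (reduction D y) (reduction Q y) sigma' (s :\ y)).
Proof.
move=> [_ [HCv _] _] [_ [HDv _] HDc] DC [Tg [_ TgS HQ QC /andP [shC nshD]]] [sQ sD suniq] xs ys.
have HT : forall t, t \in Tg -> t \notin sigma.
  by move=> t /(subsetP TgS); rewrite !inE => /andP [].
split.
  have sB : sigma \subset [set: T] :\ x.
    by apply/subsetP => t ts; rewrite !inE andbT; apply: contraNneq xs => <-.
  exists sigma; split.
    exists (Tg :\ x); split => //.
    - apply/subsetP => t; rewrite !inE => /andP [-> /HT ->]; by [].
    - rewrite HQ /restrC /cube -imset_comp; apply: eq_in_imset => Z.
      rewrite powersetE => ZS /=; apply/setP => t; rewrite !inE andbT.
      case: (t =P x) => [->|_] /=; last by rewrite andbT.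
      rewrite andbF; apply/esym/negP => /(subsetP ZS); apply/negP; exact: xs.
    - exact: imsetS.
    - by move: shC nshD; rewrite /shattered !restrC_restrC // => -> ->.
  split.
  - exact: imset_f.
  - by rewrite restrC_restrC // setIIsub.
  - move=> c /imsetP [q qQ ->]; rewrite restrC_restrC // setIIsub // => h.
    by rewrite (suniq q qQ h).
have redQ : reduction Q y = cube (sigma :\ y) Tg.
  apply/setP => c; rewrite cubeE; last first.
    by move=> t /HT; rewrite !inE negb_and => ->; rewrite orbT.
  apply/imsetP/eqP.
    move=> [q /[!inE] /andP [qQ _] ->]; move: qQ; rewrite HQ cubeE // => /eqP <-.
    apply/setP => t; rewrite !inE; case: (t =P y) => [->|_] //=.
    by rewrite ys.
  move=> h; have yc : y \notin c.
    apply/negP => yc; have : y \in Tg by rewrite -h !inE eqxx yc.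
    by move/HT; rewrite ys.
  have cQ : c \in Q.
    rewrite HQ cubeE //; apply/eqP; rewrite -h; apply/setP => t; rewrite !inE.
    by case: (t =P y) => [->|_] //=; rewrite (negbTE yc) andbF.
  exists c; last by rewrite (setDidPl _) // disjoint_sym disjoints1.
  rewrite !inE cQ /toggle (negbTE yc) HQ cubeE //; apply/eqP; rewrite -h.
  apply/setP => t; rewrite !inE.
  by case: (t =P y) => [->|_] //=; rewrite ?ys ?(negbTE yc) ?andbF.
have HT' : forall t, t \in Tg -> t \notin sigma :\ y.
  by move=> t /HT; rewrite !inE negb_and => ->; rewrite orbT.
have sQ' : s :\ y \in reduction Q y.
  move: sQ; rewrite redQ HQ !cubeE // => /eqP <-; apply/eqP/setP => t; rewrite !inE.
  by case: (t =P y) => [->|_] //=; rewrite ys.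
exists (sigma :\ y); split.
  exists Tg; split => //.
  - by apply/subsetP => t; rewrite !inE => /andP [-> _].
  - apply/subsetP => t tT; rewrite !inE andbT; have := HT t tT.
    by move=> tn; rewrite (negbTE tn) andbF; apply: contraNneq tn => ->.
  - apply: imsetS; apply/subsetP => c; rewrite !inE => /andP [cQ tQ].
    by rewrite (subsetP QC _ cQ) (subsetP QC _ tQ).
  - apply/andP; split.
      apply/shatteredP => Z ZS; exists (Tg :|: Z).
        have : Tg :|: Z \in reduction Q y by rewrite redQ; apply: imset_f; rewrite powersetE.
        apply/subsetP; apply: imsetS; apply/subsetP => c; rewrite !inE => /andP [cQ tQ].
        by rewrite (subsetP QC _ cQ) (subsetP QC _ tQ).
      apply/setP => t; rewrite !inE; have := HT' t; have := subsetP ZS t; rewrite !inE.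
      move=> h1 h2; case tZ: (t \in Z); first by rewrite orbT /= (h1 tZ).
      rewrite orbF; case tT: (t \in Tg) => //=; have := h2 tT; by case: (_ && _).
    apply/negP => /shattered_red [_]; rewrite setD1K //; exact/negP.
have sD' : (s :\ y) :&: (sigma :\ y) \notin restrC (reduction D y) (sigma :\ y).
  apply/negP => /imsetP [e /imsetP [c /[!inE] /andP [cD tD] ->] he].
  have [c0D c1D] := toggle_both cD tD.
  apply: (negP sD); apply/imsetP.
  case ysb: (y \in s).
    exists (y |: c) => //; apply/setP => t; move/setP/(_ t): he; rewrite !inE.
    by case: (t =P y) => [->|_] //=; rewrite ysb ys.
  exists (c :\ y) => //; apply/setP => t; move/setP/(_ t): he; rewrite !inE.
  by case: (t =P y) => [->|_] //=; rewrite ysb.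
split => //.
move=> c cR hc.
set A := sigma :\ y.
set R := restrC (reduction D y) A.
set M := powerset A :\: R.
have classD : class_on [set: T] D by move=> e _; exact: subsetT.
have vD : vcb D d by move=> Y /HDv; exact: int_lt.
have cD : #|D| = Phi d #|[set: T]|.
  by rewrite HDc subrK.
have [_ cred] := extremal classD vD cD (in_setT y).
have AB : A \subset [set: T] :\ y.
  by apply/subsetP => t; rewrite !inE => /andP [-> _].
have cR' : #|R| = Phi d.-1 #|A|.
  exact: (restr_extremal (erefl _) AB (class_red classD) (vcb_red vD) cred).
have sA : #|sigma| <= d by apply: int_le; exact: HCv.
have cA : #|A| < d by move: sA; rewrite (cardsD1 y sigma) ys.
have hP : (2 ^ #|A|).-1 <= Phi d.-1 #|A| by apply: Phi_ge; rewrite -ltnS (ltn_predK cA).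
have cardM : #|M| <= 1.
  have RA : R \subset powerset A.
    by apply/subsetP => Z /imsetP [e _ ->]; rewrite powersetE subsetIr.
  rewrite cardsD (setIidPr RA) card_powerset cR'.
  move: hP; generalize (2 ^ #|A|) (Phi d.-1 #|A|) => z p h.
  by rewrite leq_subLR addn1 (leq_trans (leqSpred z)) // ltnS.
have m1 : (s :\ y) :&: A \in M by rewrite inE sD' powersetE subsetIr.
have m2 : c :&: A \in M by rewrite inE hc powersetE subsetIr.
have eqA : c :&: A = (s :\ y) :&: A := card_le1_eqP cardM _ _ m1 m2.
move: cR sQ'; rewrite redQ !cubeE // => /eqP e1 /eqP e2.
by rewrite -(setID c A) -(setID (s :\ y) A) eqA e1 e2.
Qed.
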